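(* Let $K$ be a finite simplicial complex, $|\cdot|$ a norm on $\mathbb{R}^n$, $f\colon|K|\to\mathbb{R}^n$ a piecewise linear function such that on every simplex of $K$ the function $x\mapsto|f(x)|$ attains both its minimum and its maximum at a vertex, and let $\alpha>0$. Let $\chi\colon|K|\to\mathbb{R}$ be the piecewise linear function with vertex values $\chi(v)=0$ if $|f(v)|<\alpha$, $\chi(v)=1/2$ if $|f(v)|=\alpha$, and $\chi(v)=1$ if $|f(v)|>\alpha$, and put $X:=\chi^{-1}([0,1/2])$ and $A:=\chi^{-1}(\{1/2\})$. Then there exists a continuous extension $F\colon|f|^{-1}([0,\alpha])\to\mathbb{R}^n\setminus\{0\}$ of $f|_{|f|^{-1}(\{\alpha\})}$ if and only if there exists a continuous extension $G\colon X\to\mathbb{R}^n\setminus\{0\}$ of $f|_A$.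
   Context: A function is piecewise linear on $|K|$ if it is affine on each simplex of $K$; $|f|$ denotes $x\mapsto|f(x)|$. *)

(* Defs.v *)
From HB Require Import structures.
From mathcomp Require Import all_boot all_order all_algebra.
From mathcomp Require Import all_classical all_reals all_analysis.
Set Implicit Arguments. Unset Strict Implicit. Unset Printing Implicit Defensive.
Import Order.TTheory GRing.Theory Num.Theory.
Import numFieldNormedType.Exports.
Local Open Scope classical_set_scope.
Local Open Scope ring_scope.

(* Its geometric realization
   lives in R^m = 'rV[R]_m, vertex i being the standard basis vector e_i. *)
Definition is_simplicial_complex (m : nat) (K : {set {set 'I_m}}) : Prop :=
  (forall s, s \in K -> s != finset.set0) /\
  (forall s t : {set 'I_m}, s \in K -> t \subset s -> t != finset.set0 -> t \in K).

Definition vtx (R : realType) (m : nat) (i : 'I_m) : 'rV[R]_m :=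
  \row_j (if j == i then 1 else 0).

Arguments vtx R {m} i.

Definition geom_simplex (R : realType) (m : nat) (s : {set 'I_m}) : set 'rV[R]_m :=
  [set x | (forall j, 0 <= x ord0 j) /\ \sum_j x ord0 j = 1 /\
           (forall j, j \notin s -> x ord0 j = 0)].

Arguments geom_simplex R {m} s.

Definition polyhedron (R : realType) (m : nat) (K : {set {set 'I_m}}) : set 'rV[R]_m :=
  [set x | exists2 s, s \in K & geom_simplex R s x].

Arguments polyhedron R {m} K.

Definition affine_on (R : realType) (m n : nat) (S : set 'rV[R]_m)
  (f : 'rV[R]_m -> 'rV[R]_n) : Prop :=
  forall x y t, S x -> S y -> 0 <= t <= 1 ->
    f (t *: x + (1 - t) *: y) = t *: f x + (1 - t) *: f y.

Definition piecewise_linear (R : realType) (m n : nat) (K : {set {set 'I_m}})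
  (f : 'rV[R]_m -> 'rV[R]_n) : Prop :=
  forall s, s \in K -> affine_on (geom_simplex R s) f.

Definition is_norm (R : realType) (n : nat) (N : 'rV[R]_n -> R) : Prop :=
  (forall x y, N (x + y) <= N x + N y) /\
  (forall (a : R) x, N (a *: x) = `|a| * N x) /\
  (forall x, N x = 0 -> x = 0).

Definition chi_vertex (R : realType) (n : nat) (N : 'rV[R]_n -> R) (alpha : R)
  (y : 'rV[R]_n) : R :=
  if N y < alpha then 0 else if N y == alpha then 1 / 2 else 1.

(* the piecewise linear function chi on |K| with the prescribed vertex values,
   written in barycentric coordinates *)
Definition chi (R : realType) (m n : nat) (N : 'rV[R]_n -> R) (alpha : R)
  (f : 'rV[R]_m -> 'rV[R]_n) (x : 'rV[R]_m) : R :=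
  \sum_i x ord0 i * chi_vertex N alpha (f (vtx R i)).

(* Main.v *)
Require Import Defs.
From HB Require Import structures.
From mathcomp Require Import all_boot all_order all_algebra.
From mathcomp Require Import all_classical all_reals all_analysis.
From mathcomp Require Import ring lra.
Import Order.TTheory GRing.Theory Num.Theory.
Import numFieldNormedType.Exports.
Local Open Scope classical_set_scope.
Local Open Scope ring_scope.

Section topo.
Context {T U V : topologicalType}.

Lemma within_comp (A : set U) (B : set T) (g : T -> U) (h : U -> V) :
  (forall x, B x -> A (g x)) -> {within B, continuous g} ->
  {within A, continuous h} -> {within B, continuous (h \o g)}.
Proof.
move=> gBA /subspace_continuousP cg /subspace_continuousP ch.
apply/subspace_continuousP => x Bx P /= hP.
have := ch _ (gBA _ Bx) _ hP => /= hP'.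
have := cg _ Bx _ hP' => /=.
rewrite /from_subspace /within /= !nbhs_simpl /=; apply: filterS => z /= H Bz.
by apply: H => //; apply: gBA.
Qed.

Lemma within_ext (A : set T) (g h : T -> U) :
  (forall x, A x -> g x = h x) -> {within A, continuous g} -> {within A, continuous h}.
Proof.
move=> e; apply: subspace_eq_continuous => x; rewrite inE => Ax; exact: e.
Qed.

Lemma within_paste (A B C : set T) (g : T -> U) :
  closed A -> closed B -> C `<=` A `|` B ->
  {within A, continuous g} -> {within B, continuous g} -> {within C, continuous g}.
Proof.
move=> cA cB sC gA gB; apply: (continuous_subspaceW sC).
exact: withinU_continuous.
Qed.

End topo.
Section contR.
Context {R : realType}.

Lemma cont_sum {T : topologicalType} {V : normedModType R} (I : finType) (P : pred I)
  (F : I -> T -> V) x : (forall i, P i -> {for x, continuous (F i)}) ->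
  {for x, continuous (fun y => \sum_(i | P i) F i y)}.
Proof.
move=> H; apply: cvg_big => //; first exact: add_continuous.
Qed.

Lemma row_sum_vtx m (c : 'I_m -> R) : \row_j c j = \sum_j c j *: vtx R j.
Proof.
apply/rowP => k; rewrite !mxE summxE (bigD1 k) //= big1 ?addr0.
  by rewrite !mxE eqxx mulr1.
by move=> j jk; rewrite !mxE eq_sym (negbTE jk) mulr0.
Qed.

Lemma cont_row {T : topologicalType} m (g : 'I_m -> T -> R) x :
  (forall j, {for x, continuous (g j)}) ->
  {for x, continuous (fun y => \row_j g j y)}.
Proof.
move=> H.
have -> : (fun y => \row_j g j y) = (fun y => \sum_j g j y *: vtx R j).
  by apply/funext => y; exact: row_sum_vtx.
apply: cont_sum => i _; apply: continuousZr_tmp; exact: H.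
Qed.

Lemma coord_le m (x : 'rV[R]_m) j : `|x ord0 j| <= `|x|.
Proof.
rewrite (_ : `|x| = mx_norm x) // mx_normrE; apply/bigmax_geP; right => /=.
by exists (ord0, j).
Qed.

Lemma coord_cont {T : topologicalType} m (g : T -> 'rV[R]_m) j x :
  {for x, continuous g} -> {for x, continuous (fun y => g y ord0 j)}.
Proof.
move=> H; exact: (continuous_comp H (@coord_continuous R 1 m ord0 j (g x))).
Qed.

End contR.
Section normlemmas.
Context {R : realType} {n : nat} {N : 'rV[R]_n -> R} (hN : is_norm N).

Lemma N0 : N 0 = 0.
Proof. by have := hN.2.1 0 0; rewrite scale0r normr0 mul0r. Qed.

Lemma NN x : N (- x) = N x.
Proof. by have := hN.2.1 (-1) x; rewrite scaleN1r normrN normr1 mul1r. Qed.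

Lemma Nge0 x : 0 <= N x.
Proof.
have := hN.1 x (- x); rewrite subrr N0 NN => h.
by rewrite -(pmulr_rge0 _ (ltr0Sn R 1)) mulr2n mulrDl mul1r.
Qed.

Lemma NZ a x : N (a *: x) = `|a| * N x.
Proof. exact: hN.2.1. Qed.

Lemma Nsum (I : finType) (P : pred I) (F : I -> 'rV[R]_n) :
  N (\sum_(i | P i) F i) <= \sum_(i | P i) N (F i).
Proof.
elim/big_rec2: _ => [|i y1 y2 _ H]; first by rewrite N0.
apply: le_trans (hN.1 _ _) _; by rewrite lerD2l.
Qed.

Lemma N_eq0 x : N x = 0 -> x = 0.
Proof. exact: hN.2.2. Qed.

Lemma N_bound x : N x <= (\sum_j N (vtx R j)) * `|x|.
Proof.
rewrite {1}(_ : x = \sum_j x ord0 j *: vtx R j); last first.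
  rewrite -row_sum_vtx; apply/rowP => j; by rewrite mxE.
rewrite mulr_suml; apply: le_trans (Nsum _ _ _) _.
apply: ler_sum => j _; rewrite NZ mulrC ler_wpM2l ?Nge0 //.
exact: coord_le.
Qed.

Lemma N_cont : continuous N.
Proof.
move=> x; apply/(@cvgrPdist_lt _ _ _ (nbhs x) (nbhs_filter x)) => e e0.
set C := \sum_j N (vtx R j).
have C0 : 0 <= C by apply: sumr_ge0 => j _; exact: Nge0.
have d0 : 0 < e / (C + 1) by rewrite divr_gt0 // ltr_wpDl.
near=> y.
have h1 : `|N x - N y| <= N (x - y).
  have h1 := hN.1 (y - x) x; have h2 := hN.1 (x - y) y.
  rewrite !subrK -opprB NN in h1 h2.
  by rewrite ler_norml; apply/andP; split; lra.
apply: le_lt_trans h1 _; apply: le_lt_trans (N_bound _) _.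
have hy : `|x - y| < e / (C + 1) by near: y; apply: cvgr_dist_lt => //; exact: cvg_id.
apply: le_lt_trans (ler_wpM2l C0 (ltW hy)) _.
rewrite mulrA ltr_pdivrMr ?ltr_wpDl // mulrC ltr_pM2l //.
by rewrite ltrDl.
Unshelve. all: by end_near.
Qed.

End normlemmas.
Section geom.
Context {R : realType} {m : nat}.
Implicit Types (s t : {set 'I_m}) (x y : 'rV[R]_m).

Lemma gs_ge0 {s x} j : geom_simplex R s x -> 0 <= x ord0 j.
Proof. by case=> h _; exact: h. Qed.

Lemma gs_sum {s x} : geom_simplex R s x -> \sum_j x ord0 j = 1.
Proof. by case=> _ []. Qed.

Lemma gs_out {s x j} : geom_simplex R s x -> j \notin s -> x ord0 j = 0.
Proof. by case=> _ [] _ h; exact: h. Qed.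

Lemma gs_le1 {s x} j : geom_simplex R s x -> x ord0 j <= 1.
Proof.
move=> g; rewrite -(gs_sum g) (bigD1 j) //= lerDl.
by apply: sumr_ge0 => i _; exact: gs_ge0 _ g.
Qed.

Lemma vtx_coord (i j : 'I_m) : vtx R i ord0 j = (j == i)%:R.
Proof. by rewrite mxE; case: eqP. Qed.

Lemma vtx_gs s i : i \in s -> geom_simplex R s (vtx R i).
Proof.
move=> iS; split; [|split].
- by move=> j; rewrite vtx_coord ler0n.
- rewrite (bigD1 i) //= vtx_coord eqxx big1 ?addr0 // => j /negbTE ji; by rewrite vtx_coord ji.
- move=> j js; rewrite vtx_coord; case: eqP => // ji; by move: js; rewrite ji iS.
Qed.

Lemma gs_sub {s t x} : s \subset t -> geom_simplex R s x -> geom_simplex R t x.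
Proof.
move=> st [h1 [h2 h3]]; split; [done|split; first done].
move=> j jt; apply: h3; exact: (contraNN (elimT fintype.subsetP st j) jt).
Qed.

Definition supp x : {set 'I_m} := [set j | x ord0 j != 0].

Lemma supp_sub {s x} : geom_simplex R s x -> supp x \subset s.
Proof.
move=> g; apply/fintype.subsetP => j; rewrite inE; apply: contraR => js.
by rewrite (gs_out g js).
Qed.

Lemma supp_n0 {s x} : geom_simplex R s x -> supp x != finset.set0.
Proof.
move=> g; apply/finset.set0Pn; apply/existsP; apply: contraT; rewrite negb_exists => /forallP h.
have := gs_sum g; rewrite big1 ?(@oner_neq0 R) => [/esym/eqP|j _]; first by rewrite oner_eq0.
by have := h j; rewrite inE negbK => /eqP.
Qed.

Lemma gs_supp {s x} : geom_simplex R s x -> geom_simplex R (supp x) x.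
Proof.
move=> g; split; [exact: (fun j => gs_ge0 j g)|split; first exact: gs_sum g].
by move=> j; rewrite inE negbK => /eqP.
Qed.

Definition dec x (v : 'I_m) := (1 - x ord0 v)^-1 *: (x - x ord0 v *: vtx R v).

Lemma dec_coord x v j :
  dec x v ord0 j = if j == v then 0 else (1 - x ord0 v)^-1 * x ord0 j.
Proof.
rewrite !mxE; case: eqP => [->|]; first by rewrite mulr1 subrr mulr0.
by rewrite mulr0 subr0.
Qed.

Lemma dec_gs {s x v} : geom_simplex R s x -> x ord0 v != 1 -> geom_simplex R s (dec x v).
Proof.
move=> g xv1.
have xv0 : 0 < 1 - x ord0 v by rewrite subr_gt0 lt_neqAle xv1 (gs_le1 v g).
split; [|split].
- move=> j; rewrite dec_coord; case: eqP => // _.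
  by rewrite mulr_ge0 ?invr_ge0 ?(ltW xv0) // (gs_ge0 _ g).
- rewrite (bigD1 v) //= dec_coord eqxx add0r.
  under eq_bigr => j /negbTE jv do rewrite dec_coord jv.
  rewrite -mulr_sumr; have := gs_sum g; rewrite (bigD1 v) //= => h.
  have -> : \sum_(i < m | i != v) x ord0 i = 1 - x ord0 v by lra.
  by rewrite mulVf // gt_eqF.
- move=> j js; rewrite dec_coord; case: eqP => // _; by rewrite (gs_out g js) mulr0.
Qed.

Lemma dec_eq {s x v} : geom_simplex R s x -> x ord0 v != 1 ->
  x = x ord0 v *: vtx R v + (1 - x ord0 v) *: dec x v.
Proof.
move=> g xv1; have xv0 : 1 - x ord0 v != 0 by rewrite subr_eq0 eq_sym.
apply/rowP => j; rewrite !mxE; case: eqP => _; field; exact: xv0.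
Qed.

Lemma dec_supp {s x v} : geom_simplex R s x -> v \in supp x ->
  (#|supp (dec x v)| < #|supp x|)%N.
Proof.
move=> g vs; apply: proper_card; apply/fintype.properP; split.
- apply/fintype.subsetP => j; rewrite !inE dec_coord; case: (j =P v) => [->|_]; first by rewrite eqxx.
  by apply: contraNN => /eqP ->; rewrite mulr0.
- exists v => //; rewrite inE dec_coord eqxx; by rewrite eqxx.
Qed.

Lemma gs_vtx {s x v} : geom_simplex R s x -> x ord0 v = 1 -> x = vtx R v.
Proof.
move=> g xv; apply/rowP => j; rewrite vtx_coord; case: eqP => [->//|/eqP jv].
have h := gs_sum g; rewrite (bigD1 v) //= xv in h.
have : \sum_(i < m | i != v) x ord0 i == 0 by apply/eqP; lra.
rewrite psumr_eq0 => [/allP /(_ j) |i _]; last exact: gs_ge0 _ g.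
by rewrite mem_index_enum jv /= => /(_ isT) /eqP.
Qed.

End geom.
Section main.
Variables (R : realType) (m n : nat) (K : {set {set 'I_m}})
  (N : 'rV[R]_n -> R) (f : 'rV[R]_m -> 'rV[R]_n) (alpha : R).
Hypothesis hK : is_simplicial_complex K.
Hypothesis hN : is_norm N.
Hypothesis hf : piecewise_linear K f.
Hypothesis hmin : forall s, s \in K ->
     (exists2 v, v \in s & forall x, geom_simplex R s x -> N (f (vtx R v)) <= N (f x)) /\
     (exists2 v, v \in s & forall x, geom_simplex R s x -> N (f x) <= N (f (vtx R v))).
Hypothesis ha : 0 < alpha.

Local Notation P := (polyhedron R K).
Implicit Types (s : {set 'I_m}) (x y : 'rV[R]_m).

Definition w i := f (vtx R i).
Definition fl (x : 'rV[R]_m) : 'rV[R]_n := \sum_i x ord0 i *: w i.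

Lemma fl_comb a b x y : fl (a *: x + b *: y) = a *: fl x + b *: fl y.
Proof.
rewrite /fl !scaler_sumr -big_split /=; apply: eq_bigr => i _.
by rewrite !mxE scalerDl !scalerA.
Qed.

Lemma fl_vtx i : fl (vtx R i) = w i.
Proof.
rewrite /fl (bigD1 i) //= vtx_coord eqxx scale1r big1 ?addr0 //.
by move=> j /negbTE ji; rewrite vtx_coord ji scale0r.
Qed.

Lemma supp_K {s x} : s \in K -> geom_simplex R s x -> supp x \in K.
Proof. move=> sK g; exact: hK.2 s _ sK (supp_sub g) (supp_n0 g). Qed.

Lemma supp_ex {s x} : geom_simplex R s x -> exists v, v \in supp x.
Proof. by move=> /supp_n0 /finset.set0Pn. Qed.

Lemma AFF {x} : P x -> f x = fl x.
Proof.
suff H : forall k x, (#|supp x| < k)%N -> P x -> f x = fl x.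
  by move=> Px; exact: (H _ x (ltnSn _) Px).
elim=> // k IH {}x Hk [s sK g].
have [v vx] := supp_ex g.
have vs : v \in s by exact: (elimT fintype.subsetP (supp_sub g) v vx).
have [xv1|xv1] := eqVneq (x ord0 v) 1.
  by rewrite (gs_vtx g xv1) fl_vtx.
have gy := dec_gs g xv1.
have Py : P (dec x v) by exists s.
have lt := dec_supp g vx.
have IHy := IH (dec x v) (leq_trans lt Hk) Py.
rewrite (dec_eq g xv1) (hf _ sK _ _ _ (vtx_gs _ _ vs) gy); last first.
  by rewrite (gs_ge0 _ g) (gs_le1 _ g).
by rewrite fl_comb fl_vtx IHy.
Qed.

Lemma Nw_eq0 i : N (w i) <= 0 -> w i = 0.
Proof. by move=> h; apply: (N_eq0 hN); apply/eqP; rewrite eq_le h Nge0. Qed.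

Lemma ZERO {x} : P x -> fl x = 0 -> forall i, x ord0 i != 0 -> w i = 0.
Proof.
suff H : forall k x, (#|supp x| < k)%N -> P x -> fl x = 0 -> forall i, x ord0 i != 0 -> w i = 0.
  by move=> Px; exact: (H _ x (ltnSn _) Px).
elim=> // k IH {}x Hk Px fl0; case: (Px) => s sK g.
have [[v vt hv] _] := hmin _ (supp_K sK g).
have wv : w v = 0.
  apply: Nw_eq0; have := hv x (gs_supp g); rewrite (AFF Px) fl0 (N0 hN); exact.
have [xv1|xv1] := eqVneq (x ord0 v) 1.
  move=> i; rewrite (gs_vtx g xv1) vtx_coord; have [->//|iv] := eqVneq i v.
  by rewrite eqxx.
have gy := dec_gs g xv1.
have Py : P (dec x v) by exists s.
have lt := dec_supp g vt.
have fly : fl (dec x v) = 0.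
  have := fl0; rewrite {1}(dec_eq g xv1) fl_comb fl_vtx wv scaler0 add0r.
  move/eqP; rewrite scaler_eq0 subr_eq0 eq_sym (negbTE xv1) /=; exact/eqP.
have IHy := IH (dec x v) (leq_trans lt Hk) Py fly.
move=> i xi; have [->//|iv] := eqVneq i v.
apply: IHy; rewrite dec_coord (negbTE iv) mulf_neq0 // invr_eq0 subr_eq0 eq_sym //.
Qed.

Lemma EH {x} : P x -> (forall i, N (w i) < alpha -> x ord0 i = 0) -> alpha <= N (fl x).
Proof.
move=> Px hL; case: (Px) => s sK g.
have [[v vt hv] _] := hmin _ (supp_K sK g).
rewrite -(AFF Px); apply: le_trans (hv x (gs_supp g)).
rewrite -/(w v) leNgt; apply/negP => /hL; move: vt; rewrite inE => /eqP; done.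
Qed.

Definition aL := \big[Num.max/0]_(i | N (w i) < alpha) N (w i).

Lemma aL_lt : aL < alpha.
Proof. by apply: bigmax_lt => // i. Qed.

Lemma Lup {x} : P x -> (forall i, ~~ (N (w i) < alpha) -> x ord0 i = 0) -> N (fl x) <= aL.
Proof.
move=> [s sK g] hH.
apply: le_trans (Nsum hN _ _ _) _.
have -> : aL = \sum_i x ord0 i * aL by rewrite -mulr_suml (gs_sum g) mul1r.
apply: ler_sum => i _; rewrite (NZ hN) ger0_norm ?(gs_ge0 _ g) //.
case: (boolP (N (w i) < alpha)) => hi.
  by rewrite ler_wpM2l ?(gs_ge0 _ g) //; exact: (le_bigmax_cond _ _ hi).
by rewrite hH // !mul0r.
Qed.


Lemma closed_ge_fun {T : topologicalType} (g : T -> R) c :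
  continuous g -> closed [set x | c <= g x].
Proof. move=> hg; have h := @preimage_closed T _ g [set y | c <= y] (fun z _ => hg z) (@closed_ge _ c); exact: h. Qed.

Lemma closed_le_fun {T : topologicalType} (g : T -> R) c :
  continuous g -> closed [set x | g x <= c].
Proof. move=> hg; have h := @preimage_closed T _ g [set y | y <= c] (fun z _ => hg z) (@closed_le _ c); exact: h. Qed.

Lemma closed_eq_fun {T : topologicalType} (g : T -> R) c :
  continuous g -> closed [set x | g x = c].
Proof. move=> hg; have h := @preimage_closed T _ g [set y | y = c] (fun z _ => hg z) (@closed_eq _ c); exact: h. Qed.

Lemma coord_c j : continuous (fun x : 'rV[R]_m => x ord0 j).
Proof. exact: coord_continuous. Qed.

Lemma sum_c (Q : pred 'I_m) (c : 'I_m -> R) :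
  continuous (fun x : 'rV[R]_m => \sum_(i | Q i) x ord0 i * c i).
Proof.
move=> x; apply: cont_sum => i _; apply: continuousM; first exact: coord_c.
exact: cst_continuous.
Qed.

Lemma gs_closed s : closed (geom_simplex R s).
Proof.
have -> : geom_simplex R s = (\bigcap_(j in setT) [set x | 0 <= x ord0 j]) `&`
   ([set x | \sum_j x ord0 j * 1 = 1] `&`
    \bigcap_(j in [set j | j \notin s]) [set x | x ord0 j = 0]).
  apply/seteqP; split => x /=.
    by case=> h1 [h2 h3]; split; [move=> j _; exact: h1|split;
      [under eq_bigr do rewrite mulr1|move=> j; exact: h3]].
  case=> h1 [h2 h3]; split; [move=> j; exact: h1|split;
      [by move: h2; under eq_bigr do rewrite mulr1|move=> j; exact: h3]].
apply: closedI; first by apply: closed_bigI => j _; apply: closed_ge_fun; exact: coord_c.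
apply: closedI; first by apply: closed_eq_fun; exact: sum_c.
by apply: closed_bigI => j _; apply: closed_eq_fun; exact: coord_c.
Qed.

Lemma P_closed : closed P.
Proof.
have -> : P = \bigcup_(s in [set s | s \in K]) geom_simplex R s.
  apply/seteqP; split => x /=; by case=> s sK g; exists s.
apply: closed_bigcup; first exact: finite_finset.
move=> s _; exact: gs_closed.
Qed.

Lemma fl_c : continuous fl.
Proof.
move=> x; apply: cont_sum => i _; apply: continuousZr_tmp; exact: coord_c.
Qed.

Lemma Nfl_c : continuous (fun x => N (fl x)).
Proof. move=> x; exact: (continuous_comp (fl_c x) (N_cont hN (fl x))). Qed.

Definition Lb i := N (w i) < alpha.
Definition aa x := \sum_(i | Lb i) x ord0 i.
Definition bb x := \sum_(i | ~~ Lb i) x ord0 i.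
Definition den l x := l * aa x + bb x.
Definition Dm l x : 'rV[R]_m :=
  (den l x)^-1 *: \row_j ((if Lb j then l else 1) * x ord0 j).

Lemma aa_c : continuous aa.
Proof.
have -> : aa = (fun x => \sum_(i | Lb i) x ord0 i * 1).
  by apply/funext => x; rewrite /aa; apply: eq_bigr => i _; rewrite mulr1.
exact: sum_c.
Qed.

Lemma bb_c : continuous bb.
Proof.
have -> : bb = (fun x => \sum_(i | ~~ Lb i) x ord0 i * 1).
  by apply/funext => x; rewrite /bb; apply: eq_bigr => i _; rewrite mulr1.
exact: sum_c.
Qed.

Lemma aabb {s x} : geom_simplex R s x -> aa x + bb x = 1.
Proof. by move=> g; rewrite -(gs_sum g) (bigID Lb). Qed.

Lemma aa_ge0 {s x} : geom_simplex R s x -> 0 <= aa x.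
Proof. by move=> g; apply: sumr_ge0 => i _; exact: gs_ge0 _ g. Qed.

Lemma bb_ge0 {s x} : geom_simplex R s x -> 0 <= bb x.
Proof. by move=> g; apply: sumr_ge0 => i _; exact: gs_ge0 _ g. Qed.

Lemma Dm_coord l x j :
  Dm l x ord0 j = (den l x)^-1 * ((if Lb j then l else 1) * x ord0 j).
Proof. by rewrite !mxE. Qed.

Lemma bb_Dm l x : bb (Dm l x) = (den l x)^-1 * bb x.
Proof.
rewrite /bb mulr_sumr; apply: eq_bigr => i /negbTE Li.
by rewrite Dm_coord Li mul1r.
Qed.

Lemma aa_Dm l x : aa (Dm l x) = (den l x)^-1 * (l * aa x).
Proof.
rewrite /aa mulr_sumr mulr_sumr; apply: eq_bigr => i Li.
by rewrite Dm_coord Li.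
Qed.

Lemma Dm_gs {s x l} : geom_simplex R s x -> 0 <= l -> 0 < den l x ->
  geom_simplex R s (Dm l x).
Proof.
move=> g l0 d0; split; [|split].
- move=> j; rewrite Dm_coord mulr_ge0 ?invr_ge0 ?(ltW d0) // mulr_ge0 ?(gs_ge0 _ g) //.
  by case: (Lb j).
- rewrite (bigID Lb) /= -/(aa (Dm l x)) -/(bb (Dm l x)) aa_Dm bb_Dm -mulrDr.
  by rewrite mulVf ?gt_eqF.
- by move=> j js; rewrite Dm_coord (gs_out g js) !mulr0.
Qed.

Lemma Dm1 {s x} : geom_simplex R s x -> Dm 1 x = x.
Proof.
move=> g; apply/rowP => j; rewrite Dm_coord /den mul1r (aabb g) invr1 mul1r.
by case: (Lb j); rewrite mul1r.
Qed.

Lemma den_pos {s x l} : geom_simplex R s x -> 0 <= l -> 0 < bb x -> 0 < den l x.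
Proof.
move=> g l0 b0; rewrite /den; apply: lt_le_trans b0 _.
by rewrite lerDr mulr_ge0 // (aa_ge0 g).
Qed.

Lemma den_pos2 {s x l} : geom_simplex R s x -> 0 < l -> l <= 1 -> 0 < den l x.
Proof.
move=> g l0 l1; rewrite /den; apply: lt_le_trans l0 _.
have h := aabb g; have h1 := aa_ge0 g; have h2 := bb_ge0 g.
have : l * bb x <= bb x by rewrite ler_piMl.
have : l * aa x + l * bb x = l by rewrite -mulrDr h mulr1.
lra.
Qed.

Lemma fl_ne0 {x} : P x -> 0 < bb x -> fl x != 0.
Proof.
move=> Px b0; apply/eqP => fl0; move: b0; rewrite /bb big1 ?ltxx // => i Li.
apply/eqP; apply: contraT => xi.
have := ZERO Px fl0 i xi => wi; move: Li; rewrite /Lb wi (N0 hN) ha //.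
Qed.

Lemma Dm0_W1 {x} : P x -> 0 < bb x -> alpha <= N (fl (Dm 0 x)).
Proof.
move=> [s sK g] b0; apply: EH.
  exists s => //; apply: Dm_gs => //; exact: den_pos g _ b0.
by move=> i Li; rewrite Dm_coord /Lb Li mul0r mulr0.
Qed.

Definition cv i := chi_vertex N alpha (w i).

Lemma chiE x : chi N alpha f x = \sum_i x ord0 i * cv i.
Proof. by []. Qed.

Lemma chi_c : continuous (chi N alpha f).
Proof. have -> : chi N alpha f = (fun x => \sum_i x ord0 i * cv i) by []. exact: sum_c. Qed.

Lemma cv_L i : Lb i -> cv i = 0.
Proof. by rewrite /cv /chi_vertex /Lb => ->. Qed.

Lemma cv_H i : ~~ Lb i -> 1 / 2 <= cv i <= 1.
Proof.
rewrite /cv /chi_vertex /Lb => /negbTE ->.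
case: eqP => _; apply/andP; split => //; lra.
Qed.

Lemma chi_ge0 {s x} : geom_simplex R s x -> 0 <= chi N alpha f x.
Proof.
move=> g; rewrite chiE; apply: sumr_ge0 => i _; apply: mulr_ge0; first exact: gs_ge0 _ g.
case: (boolP (Lb i)) => Li; first by rewrite cv_L.
have /andP[h _] := cv_H i Li; lra.
Qed.

Lemma chi_le_bb {s x} : geom_simplex R s x -> chi N alpha f x <= bb x.
Proof.
move=> g; rewrite chiE (bigID Lb) /= big1 ?add0r; last by move=> i Li; rewrite cv_L // mulr0.
apply: ler_sum => i Li; have /andP[_ h] := cv_H i Li.
by rewrite ler_piMr ?(gs_ge0 _ g).
Qed.

Lemma chi_ge_bb {s x} : geom_simplex R s x -> bb x / 2 <= chi N alpha f x.
Proof.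
move=> g; rewrite chiE (bigID Lb) /= big1 ?add0r; last by move=> i Li; rewrite cv_L // mulr0.
rewrite /bb mulr_suml; apply: ler_sum => i Li; have /andP[h _] := cv_H i Li.
have := gs_ge0 i g; rewrite -(mulr1 (x ord0 i)) -mulrA mul1r mulr1.
by move=> x0; apply: ler_wpM2l => //; lra.
Qed.

Lemma Dm0_W2 {x} : P x -> 0 < bb x -> 1 / 2 <= chi N alpha f (Dm 0 x).
Proof.
move=> [s sK g] b0.
have gd : geom_simplex R s (Dm 0 x) by apply: Dm_gs => //; exact: den_pos g _ b0.
apply: le_trans (chi_ge_bb gd); rewrite bb_Dm /den mul0r add0r mulVf ?gt_eqF //.
Qed.

Lemma Dm_cont (lam : 'rV[R]_m -> R) x : {for x, continuous lam} ->
  den (lam x) x != 0 -> {for x, continuous (fun y => Dm (lam y) y)}.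
Proof.
move=> lc d0; rewrite /Dm.
have dc : {for x, continuous (fun y => den (lam y) y)}.
  apply: (@continuousD _ _ _ (fun y => lam y * aa y) bb x); last exact: bb_c.
  exact: (@continuousM _ _ lam aa x lc (aa_c x)).
apply: (@continuousZ _ _ _ (fun y => (den (lam y) y)^-1)
   (fun y => \row_j ((if Lb j then lam y else 1) * y ord0 j)) x).
  exact: (@continuousV _ _ (fun y => den (lam y) y) x d0 dc).
apply: cont_row => j; case: (Lb j).
  exact: (@continuousM _ _ lam (fun y => y ord0 j) x lc (coord_c j x)).
have -> : (fun y : 'rV[R]_m => (if false then lam y else 1) * y ord0 j) = (fun y => y ord0 j).
  by apply/funext => y; rewrite mul1r.
exact: coord_c.
Qed.

Lemma push (W U : set 'rV[R]_m) (phi : 'rV[R]_m -> R) (Psi : 'rV[R]_m -> 'rV[R]_n) :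
  {within P, continuous Psi} -> (forall x, P x -> Psi x != 0) ->
  (forall x, P x -> W x -> Psi x = fl x) ->
  continuous phi -> (forall x, P x -> U x -> 1 <= phi x) ->
  (forall x, P x -> 1 / 2 <= phi x -> 0 < bb x) ->
  (forall x, P x -> 0 < bb x -> W (Dm 0 x)) ->
  exists Phi : 'rV[R]_m -> 'rV[R]_n, {within P, continuous Phi} /\ (forall x, P x -> Phi x != 0) /\
              (forall x, P x -> U x -> Phi x = fl x).
Proof.
move=> cPsi nzPsi ePsi cphi Uphi phib W0.
pose lam x := Num.min 1 `|2 * phi x - 1|.
have lam0 x : 0 <= lam x by rewrite /lam le_min ler01 normr_ge0.
have lam1 x : lam x <= 1 by rewrite /lam ge_min lexx.
have lamc : continuous lam.
  move=> x; apply: (@continuous_min _ _ (fun _ => 1) (fun y => `|2 * phi y - 1|)).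
    exact: cst_continuous.
  have inner : {for x, continuous (fun y => 2 * phi y - 1)}.
    apply: (@continuousB _ _ _ (fun y => 2 * phi y) (fun _ => 1) x); last exact: cst_continuous.
    apply: continuousM; [exact: cst_continuous|exact: cphi].
  exact: (continuous_comp inner (@norm_continuous _ _ _)).
have lamh x : phi x = 1 / 2 -> lam x = 0.
  by move=> h; rewrite /lam h (_ : 2 * (1 / 2) - 1 = 0 :> R) ?normr0 ?min_r //; lra.
have lamU x : 1 <= phi x -> lam x = 1.
  move=> h; rewrite /lam min_l // ger0_norm; lra.
have denP x : P x -> 0 < den (lam x) x.
  case=> s sK g; have [h|h] := eqVneq (phi x) (1 / 2).
    apply: (den_pos g (lam0 x)); apply: phib; [by exists s|by rewrite h].
  apply: (den_pos2 g _ (lam1 x)); rewrite /lam lt_min ltr01 normr_gt0 subr_eq0.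
  by apply: contra h => /eqP h; apply/eqP; lra.
pose G x := Dm (lam x) x.
have GP x : P x -> P (G x).
  move=> Px; case: (Px) => s sK g; exists s => //; exact: Dm_gs g (lam0 x) (denP x Px).
have Gc x : P x -> {for x, continuous G}.
  by move=> Px; apply: Dm_cont (lamc x) _; rewrite gt_eqF // denP.
have bbG x : P x -> 0 < bb x -> 0 < bb (G x).
  by move=> Px b0; rewrite /G bb_Dm mulr_gt0 // invr_gt0 denP.
pose Phi x := if 1 / 2 <= phi x then fl (G x) else Psi (G x).
exists Phi; split; [|split].
- apply: (@within_paste _ _ (P `&` [set x | 1 / 2 <= phi x]) (P `&` [set x | phi x <= 1 / 2])).
  + by apply: closedI; [exact: P_closed|exact: closed_ge_fun].
  + by apply: closedI; [exact: P_closed|exact: closed_le_fun].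
  + move=> x Px; case: (lerP (1 / 2) (phi x)) => h; [left|right]; split => //.
    exact: ltW.
  + apply: (@within_ext _ _ _ (fl \o G)).
      by move=> x [Px h]; rewrite /Phi /= h.
    apply: continuous_in_subspaceT => x; rewrite inE => -[Px _].
    exact: continuous_comp (Gc x Px) (fl_c _).
  + apply: (@within_ext _ _ _ (Psi \o G)).
      move=> x [Px h]; rewrite /Phi /=; case: ifP => // h2.
      have e : phi x = 1 / 2 by apply/eqP; rewrite eq_le h h2.
      apply: ePsi; first exact: GP.
      by rewrite /G lamh //; apply: W0 => //; apply: phib => //; rewrite e.
    apply: (@within_comp _ _ _ P) => //.
      by move=> x [Px _]; exact: GP.
    apply: continuous_in_subspaceT => x; rewrite inE => -[Px _]; exact: Gc.
- move=> x Px; rewrite /Phi; case: ifP => h; last exact: nzPsi (GP x Px).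
  by apply: (fl_ne0 (GP x Px)); apply: bbG => //; exact: phib.
- move=> x Px Ux; have h := Uphi x Px Ux.
  have h2 : 1 / 2 <= phi x by lra.
  rewrite /Phi h2 /G lamU //; case: Px => s sK g; by rewrite (Dm1 g).
Qed.

Lemma bb0_coords {x} : P x -> bb x <= 0 -> forall i, ~~ Lb i -> x ord0 i = 0.
Proof.
move=> [s sK g] b0 i Li.
have : bb x == 0 by rewrite eq_le b0 (bb_ge0 g).
rewrite /bb psumr_eq0 => [/allP /(_ i)|j _]; last exact: gs_ge0 _ g.
by rewrite mem_index_enum Li /= => /(_ isT) /eqP.
Qed.

Lemma stepA :
  (exists F : 'rV[R]_m -> 'rV[R]_n,
     {within [set x | P x /\ 0 <= N (f x) <= alpha], continuous F} /\
     (forall x, P x /\ 0 <= N (f x) <= alpha -> F x != 0) /\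
     (forall x, P x /\ N (f x) = alpha -> F x = f x))
  <->
  (exists Phi : 'rV[R]_m -> 'rV[R]_n, {within P, continuous Phi} /\
     (forall x, P x -> Phi x != 0) /\
     (forall x, P x -> alpha <= N (fl x) -> Phi x = fl x)).
Proof.
split.
- move=> [F [Fc [Fnz Fb]]].
  exists (fun x => if N (fl x) <= alpha then F x else fl x); split; [|split].
  + apply: (@within_paste _ _ (P `&` [set x | N (fl x) <= alpha])
                               (P `&` [set x | alpha <= N (fl x)])).
    * by apply: closedI; [exact: P_closed|exact: closed_le_fun Nfl_c].
    * by apply: closedI; [exact: P_closed|exact: closed_ge_fun Nfl_c].
    * move=> x Px; case: (lerP (N (fl x)) alpha) => h; [left|right]; split => //.
      exact: ltW.
    * apply: (@within_ext _ _ _ F); first by move=> x [Px h]; rewrite h.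
      apply: (continuous_subspaceW _ Fc) => x [Px h]; split => //.
      by rewrite (AFF Px) h (Nge0 hN).
    * apply: (@within_ext _ _ _ fl).
        move=> x [Px h]; case: ifP => // h2.
        have e : N (fl x) = alpha by apply/eqP; rewrite eq_le h h2.
        by rewrite Fb ?(AFF Px) //; split => //; rewrite (AFF Px).
      exact: continuous_subspaceT fl_c.
  + move=> x Px; case: ifP => h.
      by apply: Fnz; split => //; rewrite (AFF Px) h (Nge0 hN).
    apply/eqP => e; move: h; rewrite e (N0 hN) ltW //.
  + move=> x Px h; case: ifP => // h2.
    have e : N (fl x) = alpha by apply/eqP; rewrite eq_le h h2.
    by rewrite Fb ?(AFF Px) //; split => //; rewrite (AFF Px).
- move=> [Phi [Pc [Pnz Pb]]]; exists Phi; split; [|split].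
  + by apply: (continuous_subspaceW _ Pc) => x [].
  + by move=> x [Px _]; exact: Pnz.
  + by move=> x [Px h]; rewrite (AFF Px) Pb // -(AFF Px) h.
Qed.

Lemma stepB :
  (exists G : 'rV[R]_m -> 'rV[R]_n,
     {within [set x | P x /\ 0 <= chi N alpha f x <= 1 / 2], continuous G} /\
     (forall x, P x /\ 0 <= chi N alpha f x <= 1 / 2 -> G x != 0) /\
     (forall x, P x /\ chi N alpha f x = 1 / 2 -> G x = f x))
  <->
  (exists Psi : 'rV[R]_m -> 'rV[R]_n, {within P, continuous Psi} /\
     (forall x, P x -> Psi x != 0) /\
     (forall x, P x -> 1 / 2 <= chi N alpha f x -> Psi x = fl x)).
Proof.
have chi0 x : P x -> 0 <= chi N alpha f x by case=> s _ g; exact: chi_ge0 g.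
split.
- move=> [F [Fc [Fnz Fb]]].
  exists (fun x => if chi N alpha f x <= 1 / 2 then F x else fl x); split; [|split].
  + apply: (@within_paste _ _ (P `&` [set x | chi N alpha f x <= 1 / 2])
                               (P `&` [set x | 1 / 2 <= chi N alpha f x])).
    * by apply: closedI; [exact: P_closed|exact: closed_le_fun chi_c].
    * by apply: closedI; [exact: P_closed|exact: closed_ge_fun chi_c].
    * move=> x Px; case: (lerP (chi N alpha f x) (1 / 2)) => h; [left|right]; split => //.
      exact: ltW.
    * apply: (@within_ext _ _ _ F); first by move=> x [Px h]; rewrite h.
      apply: (continuous_subspaceW _ Fc) => x [Px h]; split => //.
      by rewrite h chi0.
    * apply: (@within_ext _ _ _ fl).
        move=> x [Px h]; case: ifP => // h2.
        have e : chi N alpha f x = 1 / 2 by apply/eqP; rewrite eq_le h h2.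
        by rewrite Fb ?(AFF Px).
      exact: continuous_subspaceT fl_c.
  + move=> x Px; case: ifP => h.
      by apply: Fnz; split => //; rewrite h chi0.
    apply: (fl_ne0 Px); case: (Px) => s _ g; apply: lt_le_trans (chi_le_bb g).
    have h3 : 1 / 2 < chi N alpha f x by rewrite ltNge h.
    lra.
  + move=> x Px h; case: ifP => // h2.
    have e : chi N alpha f x = 1 / 2 by apply/eqP; rewrite eq_le h h2.
    by rewrite Fb ?(AFF Px).
- move=> [Phi [Pc [Pnz Pb]]]; exists Phi; split; [|split].
  + by apply: (continuous_subspaceW _ Pc) => x [].
  + by move=> x [Px _]; exact: Pnz.
  + by move=> x [Px h]; rewrite (AFF Px) Pb // h.
Qed.

Lemma phi1_c : continuous (fun x : 'rV[R]_m => 2 * chi N alpha f x).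
Proof.
move=> x; have h : {for x, continuous (fun y : 'rV[R]_m => 2 * chi N alpha f y)}.
  apply: continuousM; [exact: cst_continuous|exact: chi_c].
exact: h.
Qed.

Lemma phi2_c : continuous (fun x : 'rV[R]_m => (N (fl x) - aL) / (alpha - aL)).
Proof.
move=> x; have h : {for x, continuous (fun y : 'rV[R]_m => (N (fl y) - aL) / (alpha - aL))}.
  apply: continuousM; last exact: cst_continuous.
  apply: continuousB; [exact: Nfl_c|exact: cst_continuous].
exact: h.
Qed.

Lemma final :
  (exists F : 'rV[R]_m -> 'rV[R]_n,
     {within [set x | P x /\ 0 <= N (f x) <= alpha], continuous F} /\
     (forall x, P x /\ 0 <= N (f x) <= alpha -> F x != 0) /\
     (forall x, P x /\ N (f x) = alpha -> F x = f x))
  <->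
  (exists G : 'rV[R]_m -> 'rV[R]_n,
     {within [set x | P x /\ 0 <= chi N alpha f x <= 1 / 2], continuous G} /\
     (forall x, P x /\ 0 <= chi N alpha f x <= 1 / 2 -> G x != 0) /\
     (forall x, P x /\ chi N alpha f x = 1 / 2 -> G x = f x)).
Proof.
rewrite stepA stepB; split.
- move=> [Phi [Pc [Pnz Pb]]].
  apply: (@push [set x | alpha <= N (fl x)] _ (fun x => 2 * chi N alpha f x) Phi) => //.
  + exact: phi1_c.
  + move=> x Px /= h; lra.
  + move=> x [s sK g] h; have := chi_le_bb g; lra.
  + move=> x Px b0; exact: Dm0_W1 Px b0.
- move=> [Psi [Pc [Pnz Pb]]].
  have aLa := aL_lt.
  apply: (@push [set x | 1 / 2 <= chi N alpha f x] _
            (fun x => (N (fl x) - aL) / (alpha - aL)) Psi) => //.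
  + exact: phi2_c.
  + move=> x Px /= h; rewrite ler_pdivlMr ?subr_gt0 // mul1r; lra.
  + move=> x Px h; rewrite ltNge; apply/negP => b0.
    have := Lup Px (bb0_coords Px b0) => hl.
    move: h; rewrite ler_pdivlMr ?subr_gt0 //; lra.
  + move=> x Px b0; exact: Dm0_W2 Px b0.
Qed.
End main.

Theorem corollary3p5 (R : realType) (m n : nat) (K : {set {set 'I_m}})
  (N : 'rV[R]_n -> R) (f : 'rV[R]_m -> 'rV[R]_n) (alpha : R) :
  is_simplicial_complex K ->
  is_norm N ->
  piecewise_linear K f ->
  (forall s, s \in K ->
     (exists2 v, v \in s & forall x, geom_simplex R s x -> N (f (vtx R v)) <= N (f x)) /\
     (exists2 v, v \in s & forall x, geom_simplex R s x -> N (f x) <= N (f (vtx R v)))) ->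
  0 < alpha ->
  (exists F : 'rV[R]_m -> 'rV[R]_n,
     {within [set x | polyhedron R K x /\ 0 <= N (f x) <= alpha], continuous F} /\
     (forall x, polyhedron R K x /\ 0 <= N (f x) <= alpha -> F x != 0) /\
     (forall x, polyhedron R K x /\ N (f x) = alpha -> F x = f x))
  <->
  (exists G : 'rV[R]_m -> 'rV[R]_n,
     {within [set x | polyhedron R K x /\ 0 <= chi N alpha f x <= 1 / 2], continuous G} /\
     (forall x, polyhedron R K x /\ 0 <= chi N alpha f x <= 1 / 2 -> G x != 0) /\
     (forall x, polyhedron R K x /\ chi N alpha f x = 1 / 2 -> G x = f x)).
Proof.
move=> hK hN hf hmin ha; by apply: final.
Qed.
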